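(* Let $\alpha,\beta$ satisfy $0<\alpha<\beta<1$ and $\beta>2\sqrt{3\alpha}$. Then $\mathsf{unitaryBQP}_\alpha\neq\mathsf{unitaryBQP}_\beta$.
   Context: A partial isometry is $U=\tilde U\Pi$ with $\Pi$ a projector and $\tilde U$ an isometry; a channel completion of $U$ is a channel $\Phi$ with $\Phi(\Pi\rho\Pi)=U\Pi\rho\Pi U^\dagger$ for all $\rho$. A unitary synthesis problem is a sequence $\mathscr U=(U_x)_{x\in\{0,1\}^*}$ of partial isometries. A circuit family $(C_x)_x$ implements $\mathscr U$ with worst-case error $\delta$ if for every $x$ there is a channel completion $\Phi_x$ of $U_x$ with $\|C_x-\Phi_x\|_\diamond\le\delta(|x|)$ (diamond norm). $\mathsf{unitaryBQP}_\delta$ is the set of unitary synthesis problems implementable with worst-case error $\delta$ by a uniform polynomial-time quantum algorithm, i.e. a family of polynomial-size general quantum circuits (gates $H,\mathit{CNOT},T$, ancilla introduction, tracing out, standard-basis measurement) whose descriptions are computed from $x$ by a classical polynomial-time Turing machine. *)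

(* Defs.v *)
From mathcomp Require Import all_boot all_order all_algebra.
From mathcomp Require Import reals Rstruct complex mxtens.

Set Implicit Arguments.
Unset Strict Implicit.
Unset Printing Implicit Defensive.
Import Order.TTheory GRing.Theory Num.Theory.
Local Open Scope ring_scope.
Local Open Scope complex_scope.
Local Open Scope ring_scope.

Definition RR : rcfType := Rdefinitions.R.
Notation CC := (complex RR).

Definition adj {m n} (A : 'M[CC]_(m, n)) : 'M[CC]_(n, m) :=
  (map_mx Num.conj A)^T.

Definition unitary_mx {n} (U : 'M[CC]_n) : Prop := adj U *m U = 1%:M.

Definition partial_isometry {m n} (U : 'M[CC]_(m, n)) : Prop :=
  exists (Pi : 'M[CC]_n) (Ut : 'M[CC]_(m, n)),
    [/\ Pi *m Pi = Pi, adj Pi = Pi, adj Ut *m Ut = 1%:M & U = Ut *m Pi].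

Definition psd {n} (X : 'M[CC]_n) : Prop :=
  adj X = X /\ forall v : 'cV[CC]_n, 0 <= (adj v *m X *m v) 0 0.

(* (Psi (x) id_k) : 'M_(d1*k) -> 'M_(d2*k), index convention of mxtens
   (pair (a, r) <-> a * k + r). *)
Definition blk {d k} (r s : 'I_k) (X : 'M[CC]_(d * k)) : 'M[CC]_d :=
  \matrix_(a, b) X (mxtens_index (a, r)) (mxtens_index (b, s)).

Definition ext_id {d1 d2} (k : nat) (Psi : 'M[CC]_d1 -> 'M[CC]_d2)
  (X : 'M[CC]_(d1 * k)) : 'M[CC]_(d2 * k) :=
  \sum_(r < k) \sum_(s < k) (Psi (blk r s X) *t (delta_mx r s : 'M[CC]_k)).
Arguments ext_id {d1 d2} k Psi X.

Definition channel {d1 d2} (Phi : 'M[CC]_d1 -> 'M[CC]_d2) : Prop :=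
  [/\ (forall (a : CC) X Y, Phi (a *: X + Y) = a *: Phi X + Phi Y),
      (forall X, \tr (Phi X) = \tr X)
    & (forall k (X : 'M[CC]_(d1 * k)), psd X -> psd (ext_id k Phi X))].

(* trace norm: ||X||_1 <= c, i.e. the sum of the singular values of X
   (read off from a singular value decomposition) is at most c. *)
Definition trnorm_le {n} (X : 'M[CC]_n) (c : RR) : Prop :=
  exists (U V : 'M[CC]_n) (s : 'I_n -> RR),
    [/\ unitary_mx U, unitary_mx V, (forall i, 0 <= s i),
        X = U *m diag_mx (\row_i ((s i)%:C)%C) *m V
      & \sum_i s i <= c].

Definition diamond_le {d1 d2} (Psi : 'M[CC]_d1 -> 'M[CC]_d2) (delta : RR) : Prop :=
  forall X : 'M[CC]_(d1 * d1), trnorm_le X 1 -> trnorm_le (ext_id d1 Psi X) delta.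

(* channel completion of a partial isometry U; its projector is Pi = U^* U
   (uniquely determined by U = Ut Pi). *)
Definition channel_completion {m n} (Phi : 'M[CC]_n -> 'M[CC]_m)
  (U : 'M[CC]_(m, n)) : Prop :=
  channel Phi /\
  let Pi := adj U *m U in
  forall rho : 'M[CC]_n, Phi (Pi *m rho *m Pi) = U *m Pi *m rho *m Pi *m adj U.

(* General quantum circuits over {H, CNOT, T}, with ancillas, partial
   trace and standard-basis measurement.  A register of k qubits has
   dimension 2^k; qubit j is bit j of the basis index. *)
Inductive instr :=
| IH of nat
| IT of nat
| ICNOT of nat & nat     (* CNOT with control c, target t *)
| IAnc                   (* introduce a fresh ancilla |0> as qubit k *)
| ITr of nat
| IMeas of nat.

Definition dim_after (k : nat) (i : instr) : nat :=
  match i with IAnc => k.+1 | ITr _ => k.-1 | _ => k end.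

Definition instr_valid (k : nat) (i : instr) : bool :=
  match i with
  | IH j | IT j | ITr j | IMeas j => j < k
  | ICNOT c t => [&& c < k, t < k & c != t]
  | IAnc => true
  end%N.

Fixpoint outq (k : nat) (c : seq instr) : nat :=
  match c with [::] => k | i :: c' => outq (dim_after k i) c' end.

Fixpoint circ_valid (k : nat) (c : seq instr) : bool :=
  match c with
  | [::] => true
  | i :: c' => instr_valid k i && circ_valid (dim_after k i) c'
  end.

Definition bit (a j : nat) : bool := odd (a %/ 2 ^ j).

(* insert bit b at position j *)
Definition ins (a j : nat) (b : bool) : nat :=
  (a %/ 2 ^ j * 2 ^ j.+1 + b * 2 ^ j + a %% 2 ^ j)%N.

Definition mget {m n} (M : 'M[CC]_(m, n)) (a b : nat) : CC :=
  match (insub a : option 'I_m), (insub b : option 'I_n) with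
  | Some i, Some j => M i j
  | _, _ => 0
  end.

Definition sqrt2 : CC := (Num.sqrt (2 : RR))%:C%C.
Definition hadamard (x y : bool) : CC := (if x && y then -1 else 1) / sqrt2.
Definition tgate (x y : bool) : CC :=
  if x == y then (if x then (1 + 'i%C) / sqrt2 else 1) else 0.

Definition gate1 (k j : nat) (g : bool -> bool -> CC) : 'M[CC]_(2 ^ k) :=
  \matrix_(a, b)
    if [forall l : 'I_k, (l != j :> nat) ==> (bit a l == bit b l)]
    then g (bit a j) (bit b j) else 0.

Definition cnot (k c t : nat) : 'M[CC]_(2 ^ k) :=
  \matrix_(a, b)
    if [forall l : 'I_k, (l != t :> nat) ==> (bit a l == bit b l)]
       && (bit a t == addb (bit b t) (bit b c))
    then 1 else 0.

Definition conj_by {n} (G : 'M[CC]_n) (rho : 'M[CC]_n) := G *m rho *m adj G.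

Definition step (k : nat) (i : instr) (rho : 'M[CC]_(2 ^ k)) :
  'M[CC]_(2 ^ dim_after k i) :=
  match i return 'M[CC]_(2 ^ dim_after k i) with
  | IH j => conj_by (gate1 k j hadamard) rho
  | IT j => conj_by (gate1 k j tgate) rho
  | ICNOT c t => conj_by (cnot k c t) rho
  | IAnc => \matrix_(a, b)
       if bit a k || bit b k then 0 else mget rho (a %% 2 ^ k) (b %% 2 ^ k)
  | ITr j => \matrix_(a, b)
       \sum_(x : bool) mget rho (ins a j x) (ins b j x)
  | IMeas j => \matrix_(a, b) if bit a j == bit b j then rho a b else 0
  end.

Fixpoint run (k : nat) (c : seq instr) : 'M[CC]_(2 ^ k) -> 'M[CC]_(2 ^ outq k c) :=
  match c return 'M[CC]_(2 ^ k) -> 'M[CC]_(2 ^ outq k c) with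
  | [::] => fun rho => rho
  | i :: c' => fun rho => run c' (step i rho)
  end.

Definition circ_chan (n m : nat) (c : seq instr) (e : outq n c = m)
  (rho : 'M[CC]_(2 ^ n)) : 'M[CC]_(2 ^ m) :=
  castmx (f_equal (expn 2) e, f_equal (expn 2) e) (run c rho).

(* Binary descriptions of circuits (numbers in unary, prefix-free).   *)
Definition enc_nat (n : nat) : seq bool := rcons (nseq n true) false.

Definition enc_instr (i : instr) : seq bool :=
  match i with
  | IH j => [:: false; false; false] ++ enc_nat j
  | IT j => [:: false; false; true] ++ enc_nat j
  | ICNOT c t => [:: false; true; false] ++ enc_nat c ++ enc_nat t
  | IAnc => [:: false; true; true]
  | ITr j => [:: true; false; false] ++ enc_nat j
  | IMeas j => [:: true; false; true] ++ enc_nat j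
  end.

Definition enc_circ (n : nat) (c : seq instr) : seq bool :=
  enc_nat n ++ flatten (map enc_instr c).

Inductive move := MoveL | MoveR | Stay.

Record TM := mkTM {
  tm_q : nat;
  tm_start : 'I_tm_q.+1;
  tm_halt : 'I_tm_q.+1;
  tm_delta : 'I_tm_q.+1 -> option bool -> 'I_tm_q.+1 * option bool * move }.
Arguments tm_start t : clear implicits.
Arguments tm_halt t : clear implicits.
Arguments tm_delta t : clear implicits.

(* configuration: state, left part (reversed), scanned cell, right part *)
Definition config (M : TM) :=
  ('I_(tm_q M).+1 * seq (option bool) * option bool * seq (option bool))%type.

Definition tm_init (M : TM) (x : seq bool) : config M :=
  (tm_start M, [::], head None (map Some x), behead (map Some x)).

Definition tm_step (M : TM) (cf : config M) : config M :=
  let: (q, l, h, r) := cf in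
  if q == tm_halt M then cf else
  let: (q', w, mv) := tm_delta M q h in
  match mv with
  | MoveL => match l with
             | [::] => (q', [::], None, w :: r)
             | a :: l' => (q', l', a, w :: r) end
  | MoveR => match r with
             | [::] => (q', w :: l, None, [::])
             | a :: r' => (q', w :: l, a, r') end
  | Stay => (q', l, w, r)
  end.

Fixpoint somes (s : seq (option bool)) : seq bool :=
  match s with Some b :: s' => b :: somes s' | _ => [::] end.

(* M on input x halts within t steps with output y (the maximal
   non-blank word starting at the head) *)
Definition tm_computes_within (M : TM) (x : seq bool) (t : nat) (y : seq bool) : Prop :=
  let: (q, l, h, r) := iter t (@tm_step M) (tm_init M x) in
  q = tm_halt M /\ somes (h :: r) = y.

Record usp := USP {
  usp_n : seq bool -> nat;
  usp_m : seq bool -> nat;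
  usp_U : forall x, 'M[CC]_(2 ^ usp_m x, 2 ^ usp_n x) }.

Definition is_usp (P : usp) : Prop := forall x, partial_isometry (usp_U P x).

Definition implements (C : seq bool -> seq instr) (P : usp) (delta : nat -> RR) : Prop :=
  forall x, circ_valid (usp_n P x) (C x) /\
    exists e : outq (usp_n P x) (C x) = usp_m P x,
    exists Phi : 'M[CC]_(2 ^ usp_n P x) -> 'M[CC]_(2 ^ usp_m P x),
      channel_completion Phi (usp_U P x) /\
      diamond_le (fun rho => circ_chan e rho - Phi rho) (delta (size x)).

Definition poly_time_uniform (P : usp) (C : seq bool -> seq instr) : Prop :=
  exists (M : TM) (a k : nat), forall x,
    tm_computes_within M x (a * size x ^ k + a)%N (enc_circ (usp_n P x) (C x)).

Definition unitaryBQP (delta : nat -> RR) : usp -> Prop :=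
  fun P => is_usp P /\
    exists C : seq bool -> seq instr, poly_time_uniform P C /\ implements C P delta.

(* Main.v *)
Require Import Defs.
From mathcomp Require Import all_boot all_order all_algebra.
From mathcomp Require Import reals Rstruct complex mxtens.
From mathcomp Require Import ring lra.
From Stdlib Require Import FunctionalExtensionality ClassicalEpsilon.
Import Order.TTheory GRing.Theory Num.Theory.
Local Open Scope ring_scope.

Lemma unitary_entry n (U : 'M[CC]_n) i j : unitary_mx U -> `|U i j| <= 1.
Proof.
move=> HU.
have H1 : \sum_l `|U l j| ^+ 2 = 1.
  have H := congr1 (fun M : 'M[CC]_n => M j j) HU; rewrite !mxE eqxx /= in H; apply: etrans _ H.
  by apply: eq_bigr => l _; rewrite !mxE normCKC.
have H2 : `|U i j| ^+ 2 <= 1.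
  rewrite -H1 (bigD1 i) //= lerDl; apply: sumr_ge0 => l _; by rewrite exprn_ge0.
by rewrite -(@ler_pXn2r _ 2) ?expr1n // nnegrE.
Qed.

Lemma trnorm_entry n (Y : 'M[CC]_n) c i j : trnorm_le Y c -> `|Y i j| <= (c%:C)%C.
Proof.
move=> [U [V [s [HU HV Hs -> Hc]]]].
rewrite mul_mx_diag !mxE.
apply: (le_trans (ler_norm_sum _ _ _)).
apply: (@le_trans _ _ (\sum_l ((s l)%:C)%C)); last first.
  by rewrite -rmorph_sum lecR.
apply: ler_sum => l _; rewrite !mxE normrM normrM.
have Hsl : `|((s l)%:C)%C| = ((s l)%:C)%C by rewrite ger0_norm // ler0c.
rewrite Hsl -[X in _ <= X]mulr1 -mulrA [X in _ <= X]mulrC.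
apply: ler_pM.
- exact: normr_ge0.
- by apply: mulr_ge0; [rewrite ler0c | exact: normr_ge0].
- exact: unitary_entry.
rewrite -[X in _ <= X]mulr1; apply: ler_pM.
- by rewrite ler0c Hs.
- exact: normr_ge0.
- done.
- exact: unitary_entry.
Qed.
Lemma conj_realC (a : RR) : Num.conj ((a%:C)%C : CC) = (a%:C)%C.
Proof. by rewrite /Num.conj /= oppr0. Qed.

Lemma circ_chan_mget n m c (e : outq n c = m) rho (i j : 'I_(2 ^ m)) :
  circ_chan e rho i j = mget (run c rho) i j.
Proof.
case: m / e i j => i j; rewrite /circ_chan castmx_id /mget.
by rewrite !valK.
Qed.

Lemma Re_near (z : CC) (a al : RR) : `|z - (a%:C)%C| <= (al%:C)%C ->
  a - al <= complex.Re z <= a + al.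
Proof.
case: z => zr zi; rewrite normc_def lecR /= => H.
have H2 : `|zr - a| <= al.
  apply: le_trans H; rewrite -sqrtr_sqr; apply: ler_wsqrtr.
  by rewrite lerDl sqr_ge0.
move: H2; rewrite ler_norml => /andP[H3 H4]. apply/andP; split; lra.
Qed.

Definition sb (beta : RR) : RR := beta / 2.
Definition cb (beta : RR) : RR := Num.sqrt (1 - sb beta ^+ 2).
Definition psi (beta : RR) (b : bool) : 'M[CC]_(2 ^ 1, 2 ^ 0) :=
  \matrix_(i, j) (if (i : nat) == 0%N then (cb beta)%:C
                  else (if b then - sb beta else sb beta)%:C)%C.

Lemma sb_le1 beta : 0 <= beta <= 1 -> sb beta ^+ 2 <= 1.
Proof. move=> /andP[H0 H1]; rewrite /sb; nra. Qed.

Lemma cb_sq beta : 0 <= beta <= 1 -> cb beta ^+ 2 = 1 - sb beta ^+ 2.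
Proof. by move=> H; rewrite /cb sqr_sqrtr // subr_ge0 sb_le1. Qed.

Lemma psi_iso beta b : 0 <= beta <= 1 -> adj (psi beta b) *m psi beta b = 1%:M.
Proof.
move=> H; apply/matrixP => i j; rewrite !ord1 !mxE /=.
rewrite big_ord_recl big_ord_recl big_ord0 !mxE /=.
rewrite !conj_realC -!rmorphM -!rmorphD /= addr0.
have -> : (if b then - sb beta else sb beta) * (if b then - sb beta else sb beta) = sb beta ^+ 2.
  by case: b; rewrite ?mulrNN expr2.
by rewrite -expr2 cb_sq // subrK.
Qed.

Lemma psi_outer beta b :
  (psi beta b *m adj (psi beta b)) (@Ordinal (2^1) 0 isT) (@Ordinal (2^1) 1 isT)
  = ((if b then - (cb beta * sb beta) else cb beta * sb beta)%:C)%C.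
Proof.
rewrite !mxE big_ord1 !mxE /= conj_realC -rmorphM /=.
by case: b; rewrite ?mulrN.
Qed.

Lemma adj1 n : adj (1%:M : 'M[CC]_n) = 1%:M.
Proof.
by apply/matrixP => i j; rewrite !mxE eq_sym conjC_nat.
Qed.

Lemma trnorm1 : trnorm_le (1%:M : 'M[CC]_(2 ^ 0 * 2 ^ 0)) 1.
Proof.
exists 1%:M, 1%:M, (fun _ => 1); split => //.
- by rewrite /unitary_mx adj1 mulmx1.
- by rewrite /unitary_mx adj1 mulmx1.
- rewrite mulmx1 mul1mx; apply/matrixP => i j; rewrite !ord1 !mxE.
  by [].
- by rewrite big_ord1.
Qed.

Lemma key_alpha beta al b c (e : outq 0 c = 1%N)
  (Phi : 'M[CC]_(2 ^ 0) -> 'M[CC]_(2 ^ 1)) :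
  0 <= beta <= 1 -> channel_completion Phi (psi beta b) ->
  diamond_le (fun rho => circ_chan e rho - Phi rho) al ->
  `| mget (@run 0 c 1%:M) 0 1 -
     ((if b then - (cb beta * sb beta) else cb beta * sb beta)%:C)%C | <= (al%:C)%C.
Proof.
move=> Hb [_ Hc] Hd.
have HPhi1 : Phi 1%:M = psi beta b *m adj (psi beta b).
  have := Hc 1%:M; by rewrite /= psi_iso // !mulmx1.
have := @trnorm_entry _ _ _ (mxtens_index (@Ordinal (2^1) 0 isT, ord0))
   (mxtens_index (@Ordinal (2^1) 1 isT, ord0)) (Hd _ trnorm1).
rewrite /ext_id !big_ord1 tensmxE.
have -> : blk ord0 ord0 (1%:M : 'M[CC]_(2 ^ 0 * 2 ^ 0)) = 1%:M.
  by apply/matrixP => i j; rewrite !ord1 !mxE.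
rewrite !mxE /= mulr1 circ_chan_mget HPhi1 psi_outer.
by [].
Qed.

Definition Rm beta (b : bool) : 'M[CC]_(2 ^ 1 * 2 ^ 0) :=
  \matrix_(i, j) (if (i : nat) == (j : nat) then
                    (if (i : nat) == 0%N then sb beta else - sb beta)
                  else (if b then cb beta else - cb beta))%:C%C.

Lemma ext_beta beta b (X : 'M[CC]_(2 ^ 0 * 2 ^ 0)) : 0 <= beta <= 1 ->
  ext_id (2 ^ 0) (fun rho : 'M[CC]_(2 ^ 0) =>
     circ_chan (erefl : outq 0 [:: IAnc] = 1%N) rho - psi beta b *m rho *m adj (psi beta b)) X
  = (X ord0 ord0 * (sb beta)%:C%C) *: Rm beta b.
Proof.
move=> Hb; apply/matrixP => i j.
case: (mxtens_indexP i) => i1 i2; case: (mxtens_indexP j) => j1 j2.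
rewrite /ext_id !big_ord1 tensmxE !ord1 !mxE eqxx mulr1.
rewrite big_ord1 /mget.
have Hins : insub (0 %% 2 ^ 0)%N = Some (ord0 : 'I_(2 ^ 0)).
  by rewrite insubT //; congr Some; apply: val_inj.
have Hblk : blk 0 0 X ord0 ord0 = X 0 0.
  by rewrite !mxE; congr (X _ _); apply: val_inj.
have Hc2 : (cb beta)%:C%C * (cb beta)%:C%C = 1 - (sb beta)%:C%C * (sb beta)%:C%C.
  by rewrite -!rmorphM -rmorphB /= -!expr2 cb_sq.
case: i1 => [[|[|//]] Hi]; case: j1 => [[|[|//]] Hj]; rewrite /= !mxE /= ?Hins big_ord1 ?Hblk !mxE /= !conj_realC.
- by transitivity (X 0 0 - X 0 0 * ((cb beta)%:C%C * (cb beta)%:C%C)); [ring | rewrite Hc2; ring].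
all: by case: b; rewrite ?rmorphN /=; ring.
Qed.

Lemma Rm_unitary beta b : 0 <= beta <= 1 -> unitary_mx (Rm beta b).
Proof.
move=> Hb; rewrite /unitary_mx; apply/matrixP => i j.
have Hc2 : (cb beta)%:C%C * (cb beta)%:C%C = 1 - (sb beta)%:C%C * (sb beta)%:C%C.
  by rewrite -!rmorphM -rmorphB /= -!expr2 cb_sq.
rewrite !mxE big_ord_recl big_ord_recl big_ord0 !mxE.
case: i => [[|[|//]] Hi]; case: j => [[|[|//]] Hj]; rewrite /= !conj_realC.
all: by case: b; rewrite ?rmorphN ?mulrNN ?Hc2; ring.
Qed.

Lemma adj_scale m n (a : CC) (M : 'M[CC]_(m, n)) : adj (a *: M) = Num.conj a *: adj M.
Proof. by apply/matrixP => i j; rewrite !mxE rmorphM. Qed.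

Lemma diamond_beta beta b : 0 <= beta <= 1 ->
  diamond_le (fun rho : 'M[CC]_(2 ^ 0) =>
     circ_chan (erefl : outq 0 [:: IAnc] = 1%N) rho - psi beta b *m rho *m adj (psi beta b)) beta.
Proof.
move=> Hb X HX; rewrite ext_beta //.
set x := X 0 0.
have Hx : `|x| <= 1 by have := @trnorm_entry _ _ _ 0 0 HX; rewrite rmorph1.
set r := Num.sqrt (complex.Re x ^+ 2 + complex.Im x ^+ 2).
have Hr : `|x| = (r%:C)%C := normc_def x.
have r0 : 0 <= r := sqrtr_ge0 _.
have r1 : r <= 1 by move: Hx; rewrite Hr -(rmorph1 (real_complex RR)) lecR.
pose ph := if x == 0 then 1 else x / (r%:C)%C.
have Hxph : x = ph * (r%:C)%C.
  rewrite /ph; case: eqP => [Hx0|Hx0]; first by rewrite -Hr Hx0 normr0 mul1r.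
  by rewrite divfK // -Hr normr_eq0; apply/eqP.
have Hph : Num.conj ph * ph = 1.
  rewrite /ph; case: eqP => [_|Hx0]; first by rewrite conjC1 mulr1.
  rewrite -normCKC normrM normfV -Hr normr_id divff ?expr1n //.
  by rewrite normr_eq0; apply/eqP.
exists (ph *: Rm beta b), 1%:M, (fun _ => r * sb beta); split.
- by rewrite /unitary_mx adj_scale -scalemxAl -scalemxAr scalerA Hph scale1r Rm_unitary.
- by rewrite /unitary_mx adj1 mulmx1.
- by move=> _; apply: mulr_ge0 => //; rewrite /sb; move: Hb => /andP[H0 _]; lra.
- apply/matrixP => i j; rewrite mulmx1 mul_mx_diag !mxE Hxph [in RHS]rmorphM; ring.
- rewrite sumr_const card_ord mulr2n /sb; move: Hb => /andP[H0 H1]; nra.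
Qed.

Lemma adj_mul m n p (A : 'M[CC]_(m, n)) (B : 'M[CC]_(n, p)) :
  adj (A *m B) = adj B *m adj A.
Proof. by rewrite /adj map_mxM trmx_mul. Qed.

Lemma adjK m n (A : 'M[CC]_(m, n)) : adj (adj A) = A.
Proof. by apply/matrixP => i j; rewrite !mxE conjCK. Qed.

Lemma adj_tens m n p q (A : 'M[CC]_(m, n)) (B : 'M[CC]_(p, q)) :
  adj (A *t B) = adj A *t adj B.
Proof. by rewrite /adj map_mxT trmx_tens. Qed.

Lemma psd_conj m n (B : 'M[CC]_(m, n)) (X : 'M[CC]_n) :
  psd X -> psd (B *m X *m adj B).
Proof.
move=> [HX1 HX2]; split.
  by rewrite !adj_mul adjK HX1 mulmxA.
move=> v; have := HX2 (adj B *m v).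
by rewrite adj_mul adjK !mulmxA.
Qed.

Definition Phi_psi beta b (rho : 'M[CC]_(2 ^ 0)) : 'M[CC]_(2 ^ 1) :=
  psi beta b *m rho *m adj (psi beta b).

Lemma ext_Phi beta b k (X : 'M[CC]_(2 ^ 0 * k)) :
  ext_id k (Phi_psi beta b) X =
  (psi beta b *t (1%:M : 'M[CC]_k)) *m X *m adj (psi beta b *t (1%:M : 'M[CC]_k)).
Proof.
set Y := \matrix_(r < k, s < k) X (mxtens_index (ord0, r)) (mxtens_index (ord0, s)).
have HX : X = (1%:M : 'M[CC]_(2 ^ 0)) *t Y.
  apply/matrixP => i j.
  case: (mxtens_indexP i) => i1 i2; case: (mxtens_indexP j) => j1 j2.
  by rewrite tensmxE !mxE (ord1 i1) (ord1 j1) eqxx mul1r.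
rewrite [in RHS]HX adj_tens adj1 tensmx_mul mulmx1 mul1mx tensmx_mul mulmx1.
apply/matrixP => i j.
case: (mxtens_indexP i) => a r; case: (mxtens_indexP j) => c s.
rewrite tensmxE /ext_id summxE (bigD1 r) //= summxE (bigD1 s) //= tensmxE [delta_mx r s r s]mxE !eqxx /= mulr1.
rewrite big1 ?addr0; last first.
  move=> s' Hs'; rewrite tensmxE [delta_mx _ _ _ _]mxE eqxx /= eq_sym (negbTE Hs') mulr0 //.
rewrite big1 ?addr0; last first.
  move=> r' Hr'; rewrite summxE big1 // => s' _.
  by rewrite tensmxE [delta_mx _ _ _ _]mxE eq_sym (negbTE Hr') mulr0.
rewrite /Phi_psi !mxE !big_ord1 !mxE.
by rewrite big_ord1 !mxE mulrAC.
Qed.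

Lemma completion_psi beta b : 0 <= beta <= 1 ->
  channel_completion (Phi_psi beta b) (psi beta b).
Proof.
move=> Hb; split; last first.
  by move=> Pi rho; rewrite {}/Pi /Phi_psi psi_iso // !mulmx1 mul1mx.
split.
- by move=> a X Y; rewrite /Phi_psi mulmxDr mulmxDl -scalemxAr -scalemxAl.
- by move=> X; rewrite /Phi_psi mxtrace_mulC mulmxA psi_iso // mul1mx.
- by move=> k X HX; rewrite ext_Phi; apply: psd_conj.
Qed.

Lemma piso_psi beta b : 0 <= beta <= 1 -> partial_isometry (psi beta b).
Proof.
move=> Hb; exists 1%:M, (psi beta b); split.
- by rewrite mulmx1.
- by rewrite adj1.
- exact: psi_iso.
- by rewrite mulmx1.
Qed.
Definition tmd (q : 'I_9) (h : option bool) : 'I_9 * option bool * move :=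
  match val q with
  | 0 => (@Ordinal 9 1 isT, Some false, MoveR)
  | 1 => (@Ordinal 9 2 isT, Some false, MoveR)
  | 2 => (@Ordinal 9 3 isT, Some true, MoveR)
  | 3 => (@Ordinal 9 4 isT, Some true, MoveR)
  | 4 => (@Ordinal 9 5 isT, None, MoveL)
  | 5 => (@Ordinal 9 6 isT, h, MoveL)
  | 6 => (@Ordinal 9 7 isT, h, MoveL)
  | 7 => (@Ordinal 9 8 isT, h, MoveL)
  | _ => (@Ordinal 9 8 isT, h, Stay)
  end%N.

Definition TM0 : TM := @mkTM 8 (@Ordinal 9 0 isT) (@Ordinal 9 8 isT) tmd.

Lemma TM0_ok x : tm_computes_within TM0 x 8 [:: false; false; true; true].
Proof.
case: x => [|b0 [|b1 [|b2 [|b3 [|b4 x]]]]]; vm_compute; split; reflexivity.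
Qed.
Lemma enc_nat_cat n m s t : enc_nat n ++ s = enc_nat m ++ t -> n = m /\ s = t.
Proof.
elim: n m => [|n IH] [|m] //=; first by case.
by case=> /IH [-> ->].
Qed.

Lemma enc_instr_cat i j s t : enc_instr i ++ s = enc_instr j ++ t -> i = j /\ s = t.
Proof.
case: i => [a|a|a1 a2||a|a]; case: j => [b|b|b1 b2||b|b] /= H; try by case: H.
all: try by case: H => /enc_nat_cat [-> ->].
case: H; rewrite -!catA => /enc_nat_cat [-> /enc_nat_cat [-> ->]] //.
Qed.

Lemma flat_inj c1 c2 :
  flatten (map enc_instr c1) = flatten (map enc_instr c2) -> c1 = c2.
Proof.
elim: c1 c2 => [|i c1 IH] [|j c2] //=.
- by case: j.
- by case: i.
- by move/enc_instr_cat => [-> /IH ->].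
Qed.

Lemma enc_circ_inj n c1 c2 : enc_circ n c1 = enc_circ n c2 -> c1 = c2.
Proof. by move/enc_nat_cat => [_ /flat_inj]. Qed.

Definition fcode (q : nat) : finType :=
  ('I_q.+1 * 'I_q.+1 * {ffun 'I_q.+1 * option bool -> 'I_q.+1 * option bool * 'I_3})%type.

Definition o2m (o : 'I_3) : move :=
  match val o with 0 => MoveL | 1 => MoveR | _ => Stay end%N.
Definition m2o (m : move) : 'I_3 :=
  match m with MoveL => @Ordinal 3 0 isT | MoveR => @Ordinal 3 1 isT | Stay => @Ordinal 3 2 isT end.
Lemma m2oK : cancel m2o o2m. Proof. by case. Qed.

Definition tm_of {q : nat} (z : fcode q) : TM :=
  let: (st, hl, g) := z in
  @mkTM q st hl (fun p h => let: (q', w, mv) := g (p, h) in (q', w, o2m mv)).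

Definition dflt (q : nat) : fcode q := (ord0, ord0, [ffun _ => (ord0, None, ord0)]).

Definition dec (n : nat) : TM * nat * nat :=
  match (unpickle n : option (nat * nat * nat * nat)) with
  | Some (q, i, a, k) => (tm_of (nth (dflt q) (enum (fcode q)) i), a, k)
  | None => (tm_of (dflt 0), 0%N, 0%N)
  end.

Lemma dec_surj M a k : exists n, dec n = (M, a, k).
Proof.
case: M => q st hl d.
pose g : {ffun 'I_q.+1 * option bool -> 'I_q.+1 * option bool * 'I_3} :=
  [ffun p => let: (q', w, mv) := d p.1 p.2 in (q', w, m2o mv)].
pose z : fcode q := (st, hl, g).
exists (pickle (q, index z (enum (fcode q)), a, k)).
rewrite /dec pickleK nth_index ?mem_enum //=.
congr (_, _, _); congr mkTM.
apply: functional_extensionality => p; apply: functional_extensionality => h.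
rewrite ffunE /=; case: (d p h) => [[q' w] mv]; by rewrite m2oK.
Qed.

Definition Pdiag (x : seq bool) : Prop :=
  let: (M, a, k) := dec (size x) in
  exists c, tm_computes_within M x (a * size x ^ k + a) (enc_circ 0 c) /\
    0 <= complex.Re (mget (@run 0 c 1%:M) 0 1).

Definition fdiag (x : seq bool) : bool :=
  if excluded_middle_informative (Pdiag x) then true else false.

Definition Pb (beta : RR) : usp :=
  @USP (fun _ => 0%N) (fun _ => 1%N) (fun x => psi beta (fdiag x)).

Lemma in_beta beta : 0 <= beta <= 1 -> unitaryBQP (fun _ => beta) (Pb beta).
Proof.
move=> Hb; split.
  by move=> x; apply: piso_psi.
exists (fun _ => [:: IAnc]); split.
  by exists TM0, 4%N, 0%N => x; rewrite expn0; apply: TM0_ok.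
move=> x; split => //; exists erefl; exists (Phi_psi beta (fdiag x)); split.
  exact: completion_psi.
exact: diamond_beta.
Qed.

Lemma tm_out_unique M x t y1 y2 :
  tm_computes_within M x t y1 -> tm_computes_within M x t y2 -> y1 = y2.
Proof.
rewrite /tm_computes_within; case: (iter _ _ _) => [[[q l] h] r].
by move=> [_ <-] [_ <-].
Qed.

Lemma not_alpha beta al : 0 <= beta <= 1 -> al < cb beta * sb beta ->
  ~ unitaryBQP (fun _ => al) (Pb beta).
Proof.
move=> Hb Hal [_ [C [[M [a [k HM]]] Himp]]].
have [n Hn] := dec_surj M a k.
pose x := nseq n true.
have Hs : size x = n by rewrite size_nseq.
have HMx := HM x.
have [_ [e [Phi [Hc Hd]]]] := Himp x.
have Hk := @key_alpha beta al (fdiag x) (C x) e Phi Hb Hc Hd.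
move/Re_near: Hk => /andP[Hk1 Hk2].
have HP : Pdiag x <-> 0 <= complex.Re (mget (@run 0 (C x) 1%:M) 0 1).
  rewrite /Pdiag Hs Hn; split.
    move=> [c0 [Hc0 Hre]].
    have Hcc : c0 = C x.
      apply: (@enc_circ_inj 0); apply: tm_out_unique Hc0 _.
      by move: HMx; rewrite Hs.
    by rewrite -Hcc.
  by move=> Hre; exists (C x); split => //; move: HMx; rewrite Hs.
move: Hk1 Hk2; rewrite /fdiag; case: excluded_middle_informative => [/HP H|H] /=.
  move=> _ Hk2; lra.
move=> Hk1 _; have : ~ (0 <= complex.Re (mget (@run 0 (C x) 1%:M) 0 1)).
  by move=> H'; apply: H; apply/HP.
move/negP; rewrite -ltNge => Hlt; lra.
Qed.

Theorem mainTheorem6 (alpha beta : RR) :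
  0 < alpha -> alpha < beta -> beta < 1 -> 2 * Num.sqrt (3 * alpha) < beta ->
  unitaryBQP (fun _ => alpha) <> unitaryBQP (fun _ => beta).
Proof.
move=> H0 H1 H2 H3 Heq.
have Hb : 0 <= beta <= 1 by apply/andP; split; lra.
have Hcs : alpha < cb beta * sb beta.
  set s := Num.sqrt (3 * alpha) in H3 *.
  have s0 : 0 <= s := sqrtr_ge0 _.
  have s2 : s ^+ 2 = 3 * alpha by rewrite sqr_sqrtr //; lra.
  have Hc0 : 0 <= cb beta := sqrtr_ge0 _.
  have Hc2 := @cb_sq beta Hb.
  have hh : 0 < (beta - 2 * s) * (beta + 2 * s) by apply: mulr_gt0; lra.
  have Hbb : 12 * alpha < beta ^+ 2 by nra.
  have Hb12 : 12 * alpha < beta by nra.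
  have Hc1 : 1 / 2 <= cb beta by move: Hc2; rewrite /sb; nra.
  rewrite /sb; nra.
apply: (@not_alpha beta alpha Hb Hcs); rewrite Heq; exact: in_beta.
Qed.
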